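(* If $A,B\in\mathcal{D}$ and $d(A)<d(B)$, then there exists $D\in\mathcal{D}$ such that $A\cap B\subseteq D\subseteq B$ and $d(D)=d(A)$.
   Context: $\mathbb{N}=\{1,2,3,\dots\}$. For $A\subseteq\mathbb{N}$ let $A(n)=|A\cap[1,n]|$. Let $\mathcal{D}$ be the collection of all $A\subseteq\mathbb{N}$ for which the asymptotic density $d(A)=\lim_{n\to\infty}\frac{A(n)}{n}$ exists. *)

(* Defs.v *)
From Stdlib Require Import Reals Arith.
Open Scope R_scope.

(* A subset of N = {1,2,3,...} is represented by its characteristic function
   A : nat -> bool; only the values A k for k >= 1 matter. *)
Definition natset := nat -> bool.

Fixpoint count_upto (A : natset) (n : nat) : nat :=
  match n with
  | O => O
  | S m => (count_upto A m + (if A (S m) then 1 else 0))%nat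
  end.

Definition has_density (A : natset) (l : R) : Prop :=
  Un_cv (fun n => INR (count_upto A (S n)) / INR (S n)) l.

Definition subset_N (A B : natset) : Prop :=
  forall k : nat, (1 <= k)%nat -> A k = true -> B k = true.

Definition inter (A B : natset) : natset := fun k => andb (A k) (B k).

(* Main.v *)
Require Import Defs.
From Stdlib Require Import Reals Lra Lia Arith.
Open Scope R_scope.

Section Constr.
Variables A B : natset.

Definition dec (k c : nat) : bool :=
  andb (B k) (orb (A k) (Nat.ltb c (count_upto A k))).

Fixpoint dcount (n : nat) : nat :=
  match n with
  | O => O
  | S m => (dcount m + (if dec (S m) (dcount m) then 1 else 0))%nat
  end.

Definition Dset : natset := fun k =>
  match k with O => false | S m => dec (S m) (dcount m) end.

Lemma count_D n : count_upto Dset n = dcount n.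
Proof. induction n; simpl; auto. Qed.

Lemma key n : (dcount n <= count_upto A n)%nat /\
  exists m, (m <= n)%nat /\ (count_upto B n + count_upto A m <= dcount n + count_upto B m)%nat.
Proof.
  induction n as [|n [H1 [m [Hm H2]]]].
  - simpl. split; [lia|]. exists O. split; [lia|]. simpl. lia.
  - simpl. unfold dec.
    destruct (A (S n)) eqn:EA; destruct (B (S n)) eqn:EB; simpl; rewrite ?EA.
    + split. lia. exists m. lia.
    + split. lia. exists m. lia.
    + destruct (Nat.ltb (dcount n) (count_upto A n + 0)) eqn:E.
      * apply Nat.ltb_lt in E. split. lia. exists m. lia.
      * apply Nat.ltb_ge in E. split. lia. exists (S n). simpl. rewrite EA, EB. lia.
    + split. lia. exists m. lia.
Qed.

Lemma count_le (X : natset) n : (count_upto X n <= n)%nat.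
Proof. induction n; simpl; [lia|]. destruct (X (S n)); lia. Qed.
End Constr.

Lemma h1 x d e j : 0 < j -> Rabs (x / j - d) < e -> Rabs (x - d * j) < e * j.
Proof.
  intros Hj H. replace (x - d * j) with ((x / j - d) * j) by (field; lra).
  rewrite Rabs_mult, (Rabs_right j) by lra. apply Rmult_lt_compat_r; lra.
Qed.

Lemma h2 x d e j : 0 < j -> Rabs (x - d * j) < e * j -> Rabs (x / j - d) < e.
Proof.
  intros Hj H. replace (x / j - d) with ((x - d * j) * / j) by (field; lra).
  rewrite Rabs_mult, (Rabs_right (/ j)) by (left; apply Rinv_0_lt_compat; lra).
  apply (Rmult_lt_reg_r j); [lra|]. rewrite Rmult_assoc, Rinv_l by lra. lra.
Qed.

Lemma dens_bound (X : natset) d : has_density X d -> forall e, e > 0 ->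
  exists N, (1 <= N)%nat /\ forall j, (N <= j)%nat ->
    Rabs (INR (count_upto X j) - d * INR j) < e * INR j.
Proof.
  intros H e He. destruct (H e He) as [N HN]. exists (S N). split; [lia|].
  intros j Hj. destruct j as [|n]; [lia|]. apply h1.
  - apply lt_0_INR; lia.
  - apply HN; lia.
Qed.

Theorem lemma3p4 (A B : natset) (dA dB : R) :
  has_density A dA -> has_density B dB -> dA < dB ->
  exists D : natset,
    has_density D dA /\ subset_N (inter A B) D /\ subset_N D B.
Proof.
  intros HA HB Hlt. exists (Dset A B). split; [|split].
  - intros eps Heps. set (dl := eps / 5).
    assert (Hdl : dl > 0) by (unfold dl; lra).
    assert (Hed : eps = 5 * dl) by (unfold dl; lra). clearbody dl.
    destruct (dens_bound A dA HA dl Hdl) as [NA [HNA1 HNA]].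
    destruct (dens_bound B dB HB dl Hdl) as [NB [HNB1 HNB]].
    set (N0 := Nat.max NA NB).
    destruct (INR_archimed dl (INR N0) Hdl) as [K HK].
    exists (Nat.max N0 K). intros n Hn. unfold R_dist. rewrite count_D.
    apply h2; [apply lt_0_INR; lia|].
    destruct (key A B (S n)) as [Hd [m [Hm Hk]]].
    assert (HjK : INR K <= INR (S n)) by (apply le_INR; lia).
    assert (HjN : INR N0 <= INR (S n)) by (apply le_INR; lia).
    apply le_INR in Hd. apply le_INR in Hm. apply le_INR in Hk.
    rewrite !plus_INR in Hk.
    pose proof (HNA (S n) ltac:(lia)) as Ha. pose proof (HNB (S n) ltac:(lia)) as Hb.
    pose proof (pos_INR (count_upto A m)) as Ham0.
    pose proof (count_le B m) as Hbm. apply le_INR in Hbm.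
    set (j := INR (S n)) in *. set (a := INR (count_upto A (S n))) in *.
    set (b := INR (count_upto B (S n))) in *. set (d := INR (dcount A B (S n))) in *.
    set (am := INR (count_upto A m)) in *. set (bm := INR (count_upto B m)) in *.
    set (mm := INR m) in *.
    apply Rabs_def2 in Ha. apply Rabs_def2 in Hb. 
    assert (Hgap : a - d <= 4 * dl * j).
    { destruct (Nat.le_gt_cases N0 m) as [Hm0|Hm0].
      - pose proof (HNA m ltac:(lia)) as Ha'. pose proof (HNB m ltac:(lia)) as Hb'.
        fold am in Ha'. fold bm in Hb'. fold mm in Ha', Hb'.
        apply Rabs_def2 in Ha'. apply Rabs_def2 in Hb'.
        assert ((dB - dA) * (mm - j) <= 0).
        { assert (0 <= (dB - dA) * (j - mm)) by (apply Rmult_le_pos; lra). lra. }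
        pose proof (pos_INR m). fold mm in H0.
        nra.
      - assert (mm <= INR N0) by (unfold mm; apply le_INR; lia).
        assert (INR K * dl <= j * dl) by (apply Rmult_le_compat_r; lra).
        assert (INR N0 < dl * j) by lra.
        nra. }
    assert (0 < dl * j) by (apply Rmult_lt_0_compat; [lra|unfold j; apply lt_0_INR; lia]).
    subst eps. apply Rabs_def1; lra.
  - intros k Hk H. destruct k as [|k]; [lia|]. simpl. unfold dec.
    unfold inter in H. apply andb_prop in H. destruct H as [H1 H2].
    rewrite H1, H2. reflexivity.
  - intros k Hk H. destruct k as [|k]; [lia|]. simpl in H. unfold dec in H.
    apply andb_prop in H. tauto.
Qed.
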